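(* Let $P$ be a finite set of points in $\mathbb{R}^2$ in general position and let $(t,u,v)$ be consecutive vertices of the first convex layer $L^1$ of $P$. If $u$ is deleted from $P$, then among the vertices of $L^1$ (other than $u$), only the sensitivities of $t$ and $v$ change.
   Context: $L^1$ is the set of vertices of the convex hull of $P$. The sensitivity of a point $p\in P$ is the amount by which the area of the convex hull of $P$ decreases when $p$ is removed from $P$. *)

(* Defs.v *)
From HB Require Import structures.
From mathcomp Require Import all_boot all_order all_algebra.
From mathcomp Require Import finmap.
From mathcomp Require Import all_classical all_reals all_analysis.
Set Implicit Arguments. Unset Strict Implicit. Unset Printing Implicit Defensive.
Import Order.TTheory GRing.Theory Num.Theory.
Local Open Scope classical_set_scope.
Local Open Scope ring_scope.


Section Geometry.
Variable R : realType.

Definition pt := (R * R)%type.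

(* twice the signed area of the triangle a b c (orientation determinant) *)
Definition orient (a b c : pt) : R :=
  (b.1 - a.1) * (c.2 - a.2) - (b.2 - a.2) * (c.1 - a.1).

Definition general_position (P : {fset pt}) : Prop :=
  forall a b c, a \in P -> b \in P -> c \in P ->
    a != b -> b != c -> a != c -> orient a b c != 0.

Definition conv_hull (P : {fset pt}) : set pt :=
  [set x | exists w : pt -> R,
     (forall p, p \in P -> 0 <= w p) /\
     \sum_(p <- P) w p = 1 /\
     x = (\sum_(p <- P) w p * p.1, \sum_(p <- P) w p * p.2)].

Definition extreme_point (S : set pt) (x : pt) : Prop :=
  S x /\ forall y z (l : R), S y -> S z -> 0 < l -> l < 1 ->
    x = (l * y.1 + (1 - l) * z.1, l * y.2 + (1 - l) * z.2) -> y = z.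

Definition L1 (P : {fset pt}) : set pt := extreme_point (conv_hull P).

Definition hull_edge (P : {fset pt}) (a b : pt) : Prop :=
  L1 P a /\ L1 P b /\ a != b /\
  ((forall p, p \in P -> 0 <= orient a b p) \/
   (forall p, p \in P -> orient a b p <= 0)).

Definition consecutive_vertices (P : {fset pt}) (t u v : pt) : Prop :=
  hull_edge P t u /\ hull_edge P u v /\ t != v.

Definition area (S : set pt) : R :=
  fine ((@lebesgue_measure R \x @lebesgue_measure R) S)%E.

Definition hull_area (P : {fset pt}) : R := area (conv_hull P).

Definition sensitivity (P : {fset pt}) (p : pt) : R :=
  hull_area P - hull_area (P `\ p)%fset.

End Geometry.

(* Main.v *)
Require Import Defs.
From HB Require Import structures.
From mathcomp Require Import all_boot all_order all_algebra.
From mathcomp Require Import finmap.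
From mathcomp Require Import all_classical all_reals all_analysis.
From mathcomp Require Import ring lra measurable_realfun.
Set Implicit Arguments. Unset Strict Implicit. Unset Printing Implicit Defensive.
Import Order.TTheory GRing.Theory Num.Theory.
Local Open Scope classical_set_scope.
Local Open Scope ring_scope.


Section G.
Variable R : realType.
Implicit Types (P Q : {fset pt R}) (a b c p q x y z : pt R).

Definition comb (l : R) x y : pt R := (l * x.1 + (1 - l) * y.1, l * x.2 + (1 - l) * y.2).

Lemma conv_pt Q p : p \in Q -> conv_hull Q p.
Proof.
move=> pQ; exists (fun x => (x == p)%:R); split; first by move=> x _; rewrite ler0n.
have E (F : pt R -> R) : \sum_(x <- Q) (x == p)%:R * F x = F p.
  rewrite (big_fsetD1 p pQ) /= eqxx mul1r big1_fset ?addr0 //.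
  by move=> x; rewrite !inE => /andP[/negPf -> _] _; rewrite mul0r.
split; first by have := E (fun _ => 1); under eq_bigr do rewrite mulr1.
by rewrite !E; case: p {pQ E}.
Qed.

Lemma conv_convex Q l x y : 0 <= l <= 1 -> conv_hull Q x -> conv_hull Q y ->
  conv_hull Q (comb l x y).
Proof.
move=> /andP[l0 l1] [a [a0 [a1 ->]]] [b [b0 [b1 ->]]].
exists (fun p => l * a p + (1 - l) * b p); split.
  move=> p pQ; apply: addr_ge0; apply: mulr_ge0 => //; [exact: a0|lra|exact: b0].
split.
  by rewrite big_split /= -!mulr_sumr a1 b1; ring.
rewrite /comb /=; congr (_, _); rewrite !mulr_sumr -big_split /=;
  apply: eq_bigr => p _; ring.
Qed.

Lemma conv_sub Q Q' x : (Q' `<=` Q)%fset -> conv_hull Q' x -> conv_hull Q x.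
Proof.
move=> sQ [a [a0 [a1 ->]]].
exists (fun p => if p \in Q' then a p else 0); split.
  by move=> p _; case: ifP => // pQ; exact: a0.
have E (F : pt R -> R) : \sum_(p <- Q) (if p \in Q' then a p else 0) * F p =
    \sum_(p <- Q') a p * F p.
  rewrite -(big_fset_incl _ sQ); last by move=> p _ /negPf ->; rewrite mul0r.
  by rewrite big_seq [RHS]big_seq; apply: eq_bigr => p ->.
split; last by rewrite !E.
rewrite -(big_fset_incl _ sQ); last by move=> p _ /negPf ->.
by rewrite big_seq -[RHS]a1 [RHS]big_seq; apply: eq_bigr => p ->.
Qed.

Lemma sum_affine Q (w : pt R -> R) (c0 c1 c2 : R) :
  \sum_(p <- Q) w p * (c0 + c1 * p.1 + c2 * p.2) =
  c0 * \sum_(p <- Q) w p + c1 * \sum_(p <- Q) w p * p.1 + c2 * \sum_(p <- Q) w p * p.2.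
Proof.
rewrite !mulr_sumr -!big_split /=; apply: eq_bigr => p _; ring.
Qed.

Lemma orient_affine a b x : orient a b x =
  ((b.2 - a.2) * a.1 - (b.1 - a.1) * a.2) + (- (b.2 - a.2)) * x.1 + (b.1 - a.1) * x.2.
Proof. rewrite /orient; ring. Qed.

Lemma orient_conv Q a b k z : (forall p, p \in Q -> 0 <= k * orient a b p) ->
  conv_hull Q z -> 0 <= k * orient a b z.
Proof.
move=> H [w [w0 [w1 ->]]].
have -> : k * orient a b (\sum_(p <- Q) w p * p.1, \sum_(p <- Q) w p * p.2) =
   k * \sum_(p <- Q) w p * orient a b p.
  under [in RHS]eq_bigr do rewrite orient_affine.
  by rewrite sum_affine w1 orient_affine /= mulr1.
rewrite mulr_sumr big_seq; apply: sumr_ge0 => p pQ.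
by rewrite mulrCA; apply: mulr_ge0; [exact: w0|exact: H].
Qed.


Lemma decompW Q q (w : pt R -> R) : (forall p, p \in Q -> 0 <= w p) ->
  \sum_(p <- Q) w p = 1 -> q \in Q ->
  let x := (\sum_(p <- Q) w p * p.1, \sum_(p <- Q) w p * p.2) in
  (w q = 1 -> x = q) /\ (w q < 1 -> exists y, conv_hull (Q `\ q)%fset y /\ x = comb (w q) q y).
Proof.
move=> w0 w1 qQ x; rewrite /x !(big_fsetD1 q qQ) /=.
have S : \sum_(p <- (Q `\ q)%fset) w p = 1 - w q by rewrite -w1 (big_fsetD1 q qQ) /=; ring.
split.
  move=> wq1; have S0 : \sum_(p <- (Q `\ q)%fset) w p = 0 by rewrite S wq1 subrr.
  have Z : forall p, p \in (Q `\ q)%fset -> w p = 0.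
    move=> p pQ; move/eqP: S0; rewrite big_seq psumr_eq0.
      by move/allP => /(_ p pQ); rewrite pQ => /eqP.
    by move=> i; rewrite !inE => /andP[_ ?]; exact: w0.
  rewrite !big_seq !big1 ?addr0 ?wq1 ?mul1r; first by case: (q).
  by move=> i /Z ->; rewrite mul0r.
  by move=> i /Z ->; rewrite mul0r.
move=> wq1; have nz : 1 - w q != 0 by rewrite subr_eq0 gt_eqF.
exists ((\sum_(p <- (Q `\ q)%fset) w p * p.1) / (1 - w q), (\sum_(p <- (Q `\ q)%fset) w p * p.2) / (1 - w q)).
split.
  exists (fun p => w p / (1 - w q)); split.
    move=> p; rewrite !inE => /andP[_ pQ]; apply: divr_ge0; [exact: w0|lra].
  split; first by rewrite -mulr_suml S divff.
  by congr (_, _); rewrite mulr_suml; apply: eq_bigr => p _; rewrite mulrAC.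
by rewrite /comb /=; congr (_, _); field.
Qed.


Lemma subD1 Q q : ((Q `\ q) `<=` Q)%fset.
Proof. by apply/fsubsetP => p; rewrite !inE => /andP[]. Qed.

Lemma combxx l x : comb l x x = x.
Proof. by rewrite /comb; case: x => a b /=; congr (_, _); ring. Qed.

Lemma L1_in Q x : L1 Q x -> x \in Q.
Proof.
move=> [[w [w0 [w1 Ex]]] ext].
have [/hasP [q qQ wq]|/hasPn H] := boolP (has (fun p => 0 < w p) Q); last first.
  exfalso; have : \sum_(p <- Q) w p <= 0.
    by rewrite big_seq; apply: sumr_le0 => p /H; rewrite -leNgt.
  by rewrite w1 ler10.
have [D1 D2] := decompW w0 w1 qQ; rewrite /= -Ex in D1 D2.
have := w0 q qQ; rewrite le_eqVlt => _.
have : w q <= 1.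
  rewrite -w1 (big_fsetD1 q qQ) /= lerDl big_seq sumr_ge0 // => p.
  by rewrite !inE => /andP[_ ?]; exact: w0.
rewrite le_eqVlt => /orP[/eqP /D1 -> //|wlt]; have [y [yQ E]] := D2 wlt.
have qy : q = y.
  apply: (ext q y (w q)) => //; first exact: conv_pt.
  exact: conv_sub (subD1 Q q) yQ.
by rewrite E -qy combxx.
Qed.


Lemma orient_comb a b l x y :
  orient a b (comb l x y) = l * orient a b x + (1 - l) * orient a b y.
Proof. rewrite /orient /comb /=; ring. Qed.

Lemma comb_comb m s q y : comb m (comb s q y) y = comb (m * s) q y.
Proof. rewrite /comb /=; congr (_, _); ring. Qed.

Lemma comb0 x y : comb 0 x y = y.
Proof. by rewrite /comb; case: y => a b /=; congr (_, _); ring. Qed.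

Lemma bary_id1 t u v z : orient t u v * z.1 =
  orient u v z * t.1 + orient t u z * v.1 - orient t v z * u.1.
Proof. rewrite /orient; ring. Qed.
Lemma bary_id2 t u v z : orient t u v * z.2 =
  orient u v z * t.2 + orient t u z * v.2 - orient t v z * u.2.
Proof. rewrite /orient; ring. Qed.
Lemma bary_sum t u v z : orient u v z + orient t u z = orient t u v + orient t v z.
Proof. rewrite /orient; ring. Qed.

Lemma bary_line t u v z : orient t v z = 0 -> orient t u v != 0 ->
  z = comb (orient u v z / orient t u v) t v.
Proof.
move=> H D.
have h1 : 1 - orient u v z / orient t u v = orient t u z / orient t u v.
  rewrite -[1](divff D) -mulrBl; congr (_ / _).
  by move: (bary_sum t u v z); rewrite H addr0; lra.
rewrite /comb h1.
have E1 := bary_id1 t u v z; have E2 := bary_id2 t u v z.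
rewrite H mul0r subr0 in E1 E2.
case: z H E1 E2 h1 => z1 z2 H E1 E2 h1 /=; congr (_, _).
  by apply: (mulfI D); rewrite E1; field.
by apply: (mulfI D); rewrite E2; field.
Qed.


Lemma lemmaS Q t u v q x (sg rho : R) :
  t \in Q -> v \in Q -> q \in Q -> q != t -> q != v ->
  (forall p, p \in Q -> 0 <= sg * orient t u p) ->
  (forall p, p \in Q -> 0 <= sg * orient u v p) ->
  0 < sg * orient t u v ->
  0 < rho * orient t v q -> rho * orient t v x <= 0 ->
  conv_hull Q x -> conv_hull (Q `\ q)%fset x.
Proof.
move=> tQ vQ qQ qt qv Htu Huv HD Hq Hx [w [w0 [w1 Ex]]].
have [D1 D2] := decompW w0 w1 qQ; rewrite /= -Ex in D1 D2.
have wq0 := w0 q qQ.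
have : w q <= 1.
  rewrite -w1 (big_fsetD1 q qQ) /= lerDl big_seq sumr_ge0 // => p.
  by rewrite !inE => /andP[_ ?]; exact: w0.
rewrite le_eqVlt => /orP[/eqP /D1 xq|wlt]; first by move: Hx; rewrite xq; lra.
have [y [yQ E]] := D2 wlt.
move: wq0; rewrite le_eqVlt => /orP[/eqP wq0|wpos].
  by rewrite E -wq0 comb0.
set l := w q in wlt wpos E.
set A := rho * orient t v q.
set B := - (rho * orient t v y).
have fx : rho * orient t v x = l * A - (1 - l) * B.
  by rewrite E orient_comb /A /B; ring.
have Bpos : 0 < B.
  rewrite fx in Hx; have : l * A > 0 by apply: mulr_gt0.
  move=> lA; have : 0 < (1 - l) * B by rewrite -subr_ge0 in Hx; nra.
  by rewrite pmulr_rgt0 // subr_gt0.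
have Apos : 0 < A := Hq.
have ABpos : 0 < A + B by lra.
set s := B / (A + B).
set z := comb s q y.
have rho0 : rho != 0 by apply: contraTneq Hq => ->; rewrite mul0r ltxx.
have fz : orient t v z = 0.
  apply: (mulfI rho0); rewrite mulr0 /z orient_comb.
  have -> : rho * (s * orient t v q + (1 - s) * orient t v y) = s * A - (1 - s) * B.
    by rewrite /A /B; ring.
  rewrite /s; field; lra.
have yQ' : conv_hull Q y by exact: conv_sub (subD1 Q q) yQ.
have s01 : 0 <= s <= 1.
  by apply/andP; split; rewrite /s ?ler_pdivrMr ?divr_ge0 //; lra.
have zQ : conv_hull Q z by apply: conv_convex => //; exact: conv_pt.
have D0 : orient t u v != 0 by apply: contraTneq HD => ->; rewrite mulr0 ltxx.
have zQ' : conv_hull (Q `\ q)%fset z.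
  rewrite (bary_line fz D0); apply: conv_convex; last 2 first.
  - by apply: conv_pt; rewrite !inE tQ andbT eq_sym.
  - by apply: conv_pt; rewrite !inE vQ andbT eq_sym.
  have h1 := orient_conv Htu zQ; have h2 := orient_conv Huv zQ.
  have hs := bary_sum t u v z; rewrite fz addr0 in hs.
  have sg0 : sg != 0 by apply: contraTneq HD => ->; rewrite mul0r ltxx.
  have -> : orient u v z / orient t u v = (sg * orient u v z) / (sg * orient t u v).
    by field; apply/andP; split.
  have e : sg * orient t u v = sg * orient u v z + sg * orient t u z.
    by rewrite -hs; ring.
  apply/andP; split; first by apply: divr_ge0 => //; lra.
  by rewrite ler_pdivrMr // mul1r; lra.
have -> : x = comb (l * (A + B) / B) z y.
  by rewrite E /z comb_comb /s; congr comb; field; apply/andP; split; lra.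
apply: conv_convex => //.
apply/andP; split; first by apply: divr_ge0; [apply: mulr_ge0|]; lra.
rewrite ler_pdivrMr // mul1r; rewrite fx in Hx; nra.
Qed.


Lemma exists_min (T : eqType) (s : seq T) (f : T -> R) : s != [::] ->
  exists2 j, j \in s & forall i, i \in s -> f j <= f i.
Proof.
elim: s => // a [|b s] IH _.
  by exists a; rewrite ?mem_head // => i; rewrite inE => /eqP ->.
have [j js jm] := IH isT.
have [le|lt] := leP (f a) (f j).
  exists a; first exact: mem_head.
  move=> i; rewrite inE => /orP[/eqP -> //|/jm]; exact: le_trans.
exists j; first by rewrite inE js orbT.
move=> i; rewrite inE => /orP[/eqP ->|/jm //]; exact: ltW.
Qed.

Lemma sum_ind Q a (F : pt R -> R) : a \in Q ->
  \sum_(p <- Q) (p == a)%:R * F p = F a.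
Proof.
move=> aQ; rewrite (big_fsetD1 a aQ) /= eqxx mul1r big1_fset ?addr0 //.
by move=> x; rewrite !inE => /andP[/negPf -> _] _; rewrite mul0r.
Qed.

Definition mu4 a b c d (p : pt R) : R :=
  (p == a)%:R * orient b c d - (p == b)%:R * orient a c d +
  (p == c)%:R * orient a b d - (p == d)%:R * orient a b c.

Lemma sum_mu4 Q a b c d (F : pt R -> R) : a \in Q -> b \in Q -> c \in Q -> d \in Q ->
  \sum_(p <- Q) mu4 a b c d p * F p =
  F a * orient b c d - F b * orient a c d + F c * orient a b d - F d * orient a b c.
Proof.
move=> aQ bQ cQ dQ.
have -> : \sum_(p <- Q) mu4 a b c d p * F p =
   \sum_(p <- Q) (p == a)%:R * (F p * orient b c d) -
   \sum_(p <- Q) (p == b)%:R * (F p * orient a c d) +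
   \sum_(p <- Q) (p == c)%:R * (F p * orient a b d) -
   \sum_(p <- Q) (p == d)%:R * (F p * orient a b c).
  rewrite -sumrB -big_split -sumrB /=; apply: eq_bigr => p _; rewrite /mu4; ring.
by rewrite !sum_ind.
Qed.

Lemma small Q x : general_position Q -> conv_hull Q x ->
  exists S, [/\ (S `<=` Q)%fset, (#|` S| <= 3)%N & conv_hull S x].
Proof.
move: {2}#|` Q| (leqnn #|` Q|) => n; elim: n Q x => [|n IH] Q x.
  move=> Qn gp Hx; exists Q; split; [exact: fsubset_refl| |exact: Hx].
  exact: leq_trans Qn _.
move=> Qn gp Hx.
have [Q3|Q4] := leqP #|` Q| 3; first by exists Q; split; [exact: fsubset_refl| |].
have : exists a b c d, [/\ a \in Q, b \in Q, c \in Q, d \in Q &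
    (a != b /\ a != c /\ a != d /\ b != c /\ b != d /\ c != d)].
  have M : forall p, p \in enum_fset Q -> p \in Q by [].
  move: Q4 (fset_uniq Q) M => {Hx Qn}.
  case: (enum_fset Q) => [|a [|b [|c [|d s]]]] // _ U M.
  exists a, b, c, d; split; try (apply: M; rewrite !inE eqxx ?orbT //).
  move: U => /=; rewrite !inE !negb_or => /and5P[/and4P[ab ac ad _] /and3P[bc bd _] /andP[cd _] _ _].
  by do !split.
move=> [a [b [c [d [aQ bQ cQ dQ [ab [ac [ad [bc [bd cd]]]]]]]]]].
move: Hx => [w [w0 [w1 Ex]]].
set m := mu4 a b c d.
have S0 : \sum_(p <- Q) m p * 1 = 0 by rewrite sum_mu4 // /orient; ring.
have S1 : \sum_(p <- Q) m p * p.1 = 0 by rewrite sum_mu4 // /orient; ring.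
have S2 : \sum_(p <- Q) m p * p.2 = 0 by rewrite sum_mu4 // /orient; ring.
have md : m d != 0.
  rewrite /m /mu4 eqxx !(eq_sym d) (negPf ad) (negPf bd) (negPf cd) /=.
  have hn := gp a b c aQ bQ cQ ab bc ac; apply/eqP => H; move/eqP: hn; apply; move: H; rewrite !mul0r !mul1r; lra.
have [/hasP [p0 p0Q mp0]|/hasPn H] := boolP (has (fun p => 0 < m p) Q); last first.
  exfalso; move/eqP: S0; rewrite -oppr_eq0 -sumrN big_seq psumr_eq0.
    move/allP => /(_ d dQ); rewrite dQ /= mulr1 oppr_eq0; exact/negP.
  by move=> p /H; rewrite mulr1 -leNgt oppr_ge0.
have [j] := @exists_min _ [seq p <- Q | 0 < m p] (fun p => w p / m p)
  (ltac:(by apply/eqP => /(f_equal (fun s => p0 \in s)); rewrite mem_filter mp0 p0Q)).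
rewrite mem_filter => /andP[mj jQ] jmin.
set tau := w j / m j.
have tau0 : 0 <= tau by apply: divr_ge0; [exact: w0|exact: ltW].
set w' := fun p => w p - tau * m p.
have w'0 : forall p, p \in Q -> 0 <= w' p.
  move=> p pQ; rewrite /w' subr_ge0.
  have [mp|mp] := ltP 0 (m p).
    have := jmin p; rewrite mem_filter mp pQ => /(_ isT).
    by rewrite -/tau ler_pdivlMr.
  by apply: le_trans (w0 p pQ); apply: mulr_ge0_le0.
have w'j : w' j = 0 by rewrite /w' /tau mulrAC -mulrA divff ?mulr1 ?subrr // gt_eqF.
have sumw' : forall F : pt R -> R, \sum_(p <- Q) w' p * F p =
    \sum_(p <- Q) w p * F p - tau * \sum_(p <- Q) m p * F p.
  move=> F; rewrite mulr_sumr -sumrB; apply: eq_bigr => p _; rewrite /w'; ring.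
have Hx' : conv_hull (Q `\ j)%fset x.
  exists w'; split.
    by move=> p; rewrite !inE => /andP[_ pQ]; exact: w'0.
  have dr : forall F : pt R -> R, \sum_(p <- (Q `\ j)%fset) w' p * F p =
      \sum_(p <- Q) w' p * F p.
    by move=> F; rewrite [RHS](big_fsetD1 j jQ) /= w'j mul0r add0r.
  split.
    have := dr (fun _ => 1); under eq_bigr do rewrite mulr1.
    by move=> ->; rewrite sumw' S0 mulr0 subr0; under eq_bigr do rewrite mulr1.
  by rewrite !dr !sumw' S1 S2 !mulr0 !subr0.
have Qn' : (#|` (Q `\ j)%fset| <= n)%N by move: Qn; rewrite (cardfsD1 j Q) jQ.
have gp' : general_position (Q `\ j)%fset.
  by move=> a' b' c' /[!inE] /andP[_ ?] /andP[_ ?] /andP[_ ?]; exact: gp.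
have [S [SQ S3 HS]] := IH (Q `\ j)%fset x Qn' gp' Hx'.
exists S; split => //; exact: fsubset_trans SQ (subD1 Q j).
Qed.


Definition tri a b c : set (pt R) := [set x | exists al be ga,
  [/\ 0 <= al, 0 <= be, 0 <= ga, al + be + ga = 1 &
   x = (al * a.1 + be * b.1 + ga * c.1, al * a.2 + be * b.2 + ga * c.2)]].

Definition good a b c : bool := [&& a != b, b != c & a != c] || (a == b).

Lemma small_tri S x : conv_hull S x -> (#|` S| <= 3)%N ->
  exists a b c, [/\ a \in S, b \in S, c \in S, good a b c & tri a b c x].
Proof.
move=> [w [w0 [w1 Ex]]] S3.
have M : forall p, p \in enum_fset S -> p \in S by [].
have w0' : forall p, p \in enum_fset S -> 0 <= w p by move=> p /M; exact: w0.
move: (fset_uniq S) M w0' w1 Ex S3 => {w0}.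
case: (enum_fset S) => [|a [|b [|c [|d s]]]] // U M w0 w1 Ex _.
- by move: w1; rewrite big_nil => /eqP; rewrite eq_sym oner_eq0.
- move: w1 Ex; rewrite !big_cons !big_nil !addr0 => w1 ->.
  have aS : a \in S by apply: M; rewrite inE eqxx.
  exists a, a, a; split => //; first by rewrite /good eqxx orbT.
  exists 1, 0, 0; split => //; rewrite ?lexx ?ler01 //; first by rewrite !addr0.
  by rewrite w1 !mul0r !mul1r !addr0.
- move: w1 Ex; rewrite !big_cons !big_nil !addr0 => w1 ->.
  have aS : a \in S by apply: M; rewrite inE eqxx.
  have bS : b \in S by apply: M; rewrite !inE eqxx orbT.
  exists a, a, b; split => //; first by rewrite /good eqxx orbT.
  exists (w a), 0, (w b); split => //; rewrite ?lexx; try (apply: w0; rewrite !inE eqxx ?orbT //).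
    by rewrite addr0.
  by rewrite !mul0r !addr0.
- move: w1 Ex; rewrite !big_cons !big_nil !addr0 => w1 ->.
  have aS : a \in S by apply: M; rewrite inE eqxx.
  have bS : b \in S by apply: M; rewrite !inE eqxx orbT.
  have cS : c \in S by apply: M; rewrite !inE eqxx !orbT.
  exists a, b, c; split => //.
    move: U => /=; rewrite !inE !negb_or andbT => /andP[/andP[ab ac] bc].
    by rewrite /good ab ac bc.
  exists (w a), (w b), (w c); split; try (apply: w0; rewrite !inE eqxx ?orbT //).
    by rewrite addrA in w1.
  by rewrite !addrA.
Qed.


Lemma tri_conv Q a b c x : a \in Q -> b \in Q -> c \in Q -> tri a b c x ->
  conv_hull Q x.
Proof.
move=> aQ bQ cQ [al [be [ga [al0 be0 ga0 s1 ->]]]].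
have [e|ne] := eqVneq (al + be) 0.
  have al00 : al = 0 by lra.
  have be00 : be = 0 by lra.
  have -> : ga = 1 by lra.
  rewrite al00 be00 !mul0r !add0r !mul1r; case: c cQ => ? ? ?; exact: conv_pt.
have -> : (al * a.1 + be * b.1 + ga * c.1, al * a.2 + be * b.2 + ga * c.2) =
    comb (al + be) (comb (al / (al + be)) a b) c.
  rewrite /comb /=; have -> : ga = 1 - (al + be) by lra.
  congr (_, _); field => //.
apply: conv_convex; [|apply: conv_convex|exact: conv_pt].
- apply/andP; split; lra.
- apply/andP; split; first by apply: divr_ge0; lra.
  by rewrite ler_pdivrMr ?mul1r; lra.
- exact: conv_pt.
- exact: conv_pt.
Qed.

Definition Dtri Q : set (pt R * pt R * pt R) :=
  [set i | [/\ i.1.1 \in Q, i.1.2 \in Q, i.2 \in Q & good i.1.1 i.1.2 i.2]].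

Lemma conv_eq Q : general_position Q ->
  conv_hull Q = \bigcup_(i in Dtri Q) tri i.1.1 i.1.2 i.2.
Proof.
move=> gp; apply/seteqP; split => x.
  move=> /(small gp) [S [SQ S3 HS]].
  have [a [b [c [aS bS cS g T]]]] := small_tri HS S3.
  exists (a, b, c) => //; split => //=; exact: (fsubsetP SQ).
by move=> [[[a b] c] [/= aQ bQ cQ _]]; exact: tri_conv.
Qed.

End G.


Section M.
Variable R : realType.
Implicit Types (P Q : {fset pt R}) (a b c p q x y z : pt R).

Lemma maff (k0 k1 k2 : R) : measurable_fun setT (fun x : R * R => k0 + k1 * x.1 + k2 * x.2).
Proof.
apply: measurable_funD; [apply: measurable_funD|].
- exact: measurable_cst.
- apply: measurable_funM; [exact: measurable_cst| exact: measurable_fst].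
- apply: measurable_funM; [exact: measurable_cst| exact: measurable_snd].
Qed.

Lemma mhalfg (g : pt R -> R) (k0 k1 k2 : R) :
  (forall x, g x = k0 + k1 * x.1 + k2 * x.2) -> measurable [set x : R * R | 0 <= g x].
Proof.
move=> eg.
have := maff k0 k1 k2 measurableT (measurable_itv `[0, +oo[); rewrite setTI.
congr measurable; apply/seteqP; split => x /=; rewrite in_itv /= andbT eg //.
Qed.

Lemma mhalf_or a b (k : R) : measurable [set x : R * R | 0 <= k * orient a b x].
Proof.
apply: (@mhalfg _ (k * ((b.2 - a.2) * a.1 - (b.1 - a.1) * a.2)) (k * (- (b.2 - a.2))) (k * (b.1 - a.1))).
by move=> x; rewrite orient_affine; ring.
Qed.


Lemma tri_meas_nd a b c : orient a b c != 0 -> measurable (tri a b c).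
Proof.
move=> D0; set D := orient a b c.
have -> : tri a b c = [set x : R * R | 0 <= D^-1 * orient b c x] `&`
    [set x : R * R | 0 <= D^-1 * orient c a x] `&` [set x : R * R | 0 <= D^-1 * orient a b x].
  apply/seteqP; split => x /=.
    move=> [al [be [ga [al0 be0 ga0 s1 ->]]]].
    have -> : ga = 1 - al - be by lra.
    have E1 : orient b c (al * a.1 + be * b.1 + (1 - al - be) * c.1,
      al * a.2 + be * b.2 + (1 - al - be) * c.2) = al * D by rewrite /D /orient /=; ring.
    have E2 : orient c a (al * a.1 + be * b.1 + (1 - al - be) * c.1,
      al * a.2 + be * b.2 + (1 - al - be) * c.2) = be * D by rewrite /D /orient /=; ring.
    have E3 : orient a b (al * a.1 + be * b.1 + (1 - al - be) * c.1,
      al * a.2 + be * b.2 + (1 - al - be) * c.2) = (1 - al - be) * D by rewrite /D /orient /=; ring.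
    rewrite E1 E2 E3 !(mulrC D^-1) !mulfK //; split; [split|]; lra.
  move=> [[h1 h2] h3].
  exists (D^-1 * orient b c x), (D^-1 * orient c a x), (D^-1 * orient a b x); split => //.
    rewrite -!mulrDr; apply: (mulfI D0); rewrite -/D mulrA mulfV // mul1r mulr1 /D /orient; ring.
  case: x {h1 h2 h3} => x1 x2 /=; move: D0; rewrite /D /orient /= => D0.
  by congr (_, _); field.
by apply: measurableI; [apply: measurableI|]; exact: mhalf_or.
Qed.


Lemma pt_meas a : measurable (tri a a a).
Proof.
have -> : tri a a a = [set x : R * R | 0 <= x.1 - a.1] `&` [set x : R * R | 0 <= a.1 - x.1]
   `&` [set x : R * R | 0 <= x.2 - a.2] `&` [set x : R * R | 0 <= a.2 - x.2].
  apply/seteqP; split => x /=.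
    move=> [al [be [ga [_ _ _ s1 ->]]]] /=.
    rewrite -!mulrDl s1 !mul1r !subrr; split; [split; [split|]|]; exact: lexx.
  move=> [[[h1 h2] h3] h4]; exists 1, 0, 0; split; rewrite ?lexx ?ler01 ?addr0 //.
  rewrite !mul0r !addr0 !mul1r; case: x h1 h2 h3 h4 => x1 x2 /= h1 h2 h3 h4.
  by congr (_, _); lra.
apply: measurableI; [apply: measurableI; [apply: measurableI|]|].
- by apply: (@mhalfg _ (- a.1) 1 0) => x; ring.
- by apply: (@mhalfg _ (a.1) (-1) 0) => x; ring.
- by apply: (@mhalfg _ (- a.2) 0 1) => x; ring.
- by apply: (@mhalfg _ (a.2) 0 (-1)) => x; ring.
Qed.

Definition dotp a c x : R := (x.1 - a.1) * (c.1 - a.1) + (x.2 - a.2) * (c.2 - a.2).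

Lemma seg_meas a c : a != c -> measurable (tri a a c).
Proof.
move=> ac; set N := (c.1 - a.1) ^+ 2 + (c.2 - a.2) ^+ 2.
have Npos : 0 < N.
  rewrite lt_neqAle; apply/andP; split; last by rewrite /N; apply: addr_ge0; exact: sqr_ge0.
  apply/eqP => N0; move/eqP: ac; apply; move: N0; rewrite /N.
  have sq0 : forall r : R, 0 <= r ^+ 2 by move=> r; exact: sqr_ge0.
  move=> N0; have h1 : (c.1 - a.1) ^+ 2 = 0 by have := sq0 (c.1 - a.1); have := sq0 (c.2 - a.2); lra.
  have h2 : (c.2 - a.2) ^+ 2 = 0 by have := sq0 (c.1 - a.1); have := sq0 (c.2 - a.2); lra.
  move/eqP: h1; move/eqP: h2; rewrite !sqrf_eq0 !subr_eq0 => /eqP h2 /eqP h1.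
  by clear N0; move: h1 h2; clear N; case: a => a1 a2; case: c => c1 c2 /= -> ->.
have -> : tri a a c = [set x : R * R | 0 <= 1 * orient a c x] `&` [set x : R * R | 0 <= (-1) * orient a c x]
   `&` [set x : R * R | 0 <= dotp a c x] `&` [set x : R * R | 0 <= N - dotp a c x].
  apply/seteqP; split => x /=.
    move=> [al [be [ga [al0 be0 ga0 s1 ->]]]] /=.
    have -> : al = 1 - be - ga by lra.
    rewrite /orient /dotp /=.
    have e1 : (c.1 - a.1) * ((1 - be - ga) * a.2 + be * a.2 + ga * c.2 - a.2) -
      (c.2 - a.2) * ((1 - be - ga) * a.1 + be * a.1 + ga * c.1 - a.1) = 0 by ring.
    have e2 : ((1 - be - ga) * a.1 + be * a.1 + ga * c.1 - a.1) * (c.1 - a.1) +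
     ((1 - be - ga) * a.2 + be * a.2 + ga * c.2 - a.2) * (c.2 - a.2) = ga * N by rewrite /N; ring.
    rewrite e1 e2 mulr0 lexx; split; [split; [split|]|] => //.
      by apply: mulr_ge0 => //; exact: ltW.
    have -> : N - ga * N = (1 - ga) * N by ring.
    by apply: mulr_ge0; [lra|exact: ltW].
  move=> [[[h1 h2] h3] h4].
  have o0 : orient a c x = 0 by lra.
  exists (1 - dotp a c x / N), 0, (dotp a c x / N); split; rewrite ?lexx //.
  - by rewrite subr_ge0 ler_pdivrMr // mul1r; lra.
  - by apply: divr_ge0 => //; exact: ltW.
  - by rewrite addr0 subrK.
  have Nn0 : N != 0 by rewrite gt_eqF.
  move: o0; rewrite /orient /dotp; case: x {h1 h2 h3 h4} => x1 x2 /= o0.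
  congr (_, _); apply: (mulfI Nn0).
    have -> : N * x1 = N * a.1 + ((x1 - a.1) * (c.1 - a.1) + (x2 - a.2) * (c.2 - a.2)) * (c.1 - a.1)
       - ((c.1 - a.1) * (x2 - a.2) - (c.2 - a.2) * (x1 - a.1)) * (c.2 - a.2) by rewrite /N; ring.
    by rewrite o0; field.
  have -> : N * x2 = N * a.2 + ((x1 - a.1) * (c.1 - a.1) + (x2 - a.2) * (c.2 - a.2)) * (c.2 - a.2)
     + ((c.1 - a.1) * (x2 - a.2) - (c.2 - a.2) * (x1 - a.1)) * (c.1 - a.1) by rewrite /N; ring.
  by rewrite o0; field.
apply: measurableI; [apply: measurableI; [apply: measurableI|]|].
- exact: mhalf_or.
- exact: mhalf_or.
- apply: (@mhalfg _ (- a.1 * (c.1 - a.1) - a.2 * (c.2 - a.2)) (c.1 - a.1) (c.2 - a.2)).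
  by move=> x; rewrite /dotp; ring.
- apply: (@mhalfg _ (N + a.1 * (c.1 - a.1) + a.2 * (c.2 - a.2)) (- (c.1 - a.1)) (- (c.2 - a.2))).
  by move=> x; rewrite /dotp; ring.
Qed.

Lemma conv_meas Q : general_position Q -> measurable (conv_hull Q).
Proof.
move=> gp; rewrite conv_eq //; apply: fin_bigcup_measurable.
  apply: (@sub_finite_set _ _ ([set` Q] `*` [set` Q] `*` [set` Q])).
    by move=> [[a b] c] [/= aQ bQ cQ _].
  by apply: finite_setX; [apply: finite_setX|]; exact: finite_fset.
move=> [[a b] c] [/= aQ bQ cQ]; rewrite /good.
case: (boolP [&& _, _ & _]) => [/and3P[ab bc ac] _|_ /= /eqP <-].
  by apply: tri_meas_nd; exact: gp.
by case: (eqVneq a c) => [<-|ac]; [exact: pt_meas|exact: seg_meas].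
Qed.


Definition mu2 := (@lebesgue_measure R \x @lebesgue_measure R)%E.

Lemma conv_box Q x : conv_hull Q x ->
  let M := \sum_(p <- Q) (`|p.1| + `|p.2|) in `|x.1| <= M /\ `|x.2| <= M.
Proof.
move=> [w [w0 [w1 ->]]] M /=.
have pM : forall p, p \in Q -> `|p.1| <= M /\ `|p.2| <= M.
  move=> p pQ; have H : `|p.1| + `|p.2| <= M.
    rewrite /M (big_fsetD1 p pQ) /= lerDl; apply: sumr_ge0 => i _; exact: addr_ge0.
  by split; apply: le_trans H; rewrite ?lerDl ?lerDr.
have wM : \sum_(p <- Q) w p * M = M by rewrite -mulr_suml w1 mul1r.
split.
  apply: le_trans (ler_norm_sum _ _ _) _; rewrite -[X in _ <= X]wM big_seq [X in _ <= X]big_seq.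
  apply: ler_sum => p pQ; rewrite normrM ger0_norm ?w0 //; apply: ler_wpM2l; first exact: w0.
  by case: (pM p pQ).
apply: le_trans (ler_norm_sum _ _ _) _; rewrite -[X in _ <= X]wM big_seq [X in _ <= X]big_seq.
apply: ler_sum => p pQ; rewrite normrM ger0_norm ?w0 //; apply: ler_wpM2l; first exact: w0.
by case: (pM p pQ).
Qed.

Lemma conv_fin Q : general_position Q -> (mu2 (conv_hull Q) < +oo)%E.
Proof.
move=> gp; pose M : R := \sum_(p <- Q) (`|p.1| + `|p.2|).
have sub : conv_hull Q `<=` `[- M, M]%classic `*` `[- M, M]%classic.
  move=> x /conv_box /= [h1 h2]; split => /=; rewrite in_itv /= -ler_norml //.
have mC : measurable (conv_hull Q) by exact: conv_meas.
have mB : measurable (`[- M, M]%classic `*` `[- M, M]%classic : set (R * R)).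
  by apply: measurableX; exact: measurable_itv.
have L : (mu2 (conv_hull Q) <= mu2 (`[(- M)%R, M]%classic `*` `[(- M)%R, M]%classic))%E.
  exact: (le_measure mu2 (mem_set mC) (mem_set mB) sub).
apply: (le_lt_trans L).
have := @product_measure1E _ _ _ _ R (@lebesgue_measure R) (@lebesgue_measure R) _ _
  (measurable_itv `[(- M)%R, M]) (measurable_itv `[(- M)%R, M]).
move=> E.
have E' : (mu2 (`[(- M)%R, M]%classic `*` `[(- M)%R, M]%classic) = lebesgue_measure `[(- M)%R, M]%classic * lebesgue_measure `[(- M)%R, M]%classic)%E.
  exact: E.
rewrite E'.
by rewrite lebesgue_measure_itv /=; case: ifP => _; rewrite ?mul0e ?EFinB -?EFinM ?ltry.
Qed.

End M.


Section F.
Variable R : realType.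
Implicit Types (P Q : {fset pt R}) (a b c p q x y z : pt R).

Lemma comb_bary (D a b c : R) t u v w : D != 0 -> a + c != 0 -> a + b + c = D ->
  D * w.1 = a * t.1 + b * u.1 + c * v.1 -> D * w.2 = a * t.2 + b * u.2 + c * v.2 ->
  w = comb (b / D) u (comb (a / (a + c)) t v).
Proof.
move=> D0 ac0 s E1 E2.
have hb : b = D - a - c by lra.
subst b.
rewrite /comb /=; case: w E1 E2 => w1 w2 /= E1 E2; congr (_, _).
  apply: (mulfI D0); rewrite E1; field; rewrite ?D0 ?ac0 //.
apply: (mulfI D0); rewrite E2; field; rewrite ?D0 ?ac0 //.
Qed.

Lemma fine_split (X G : set (R * R)) : measurable X -> measurable G ->
  (mu2 X < +oo)%E ->
  fine (mu2 X) = fine (mu2 (X `\` G)) + fine (mu2 (X `&` G)).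
Proof.
move=> mX mG fX.
have e : mu2 X = (mu2 (X `\` G) + mu2 (X `&` G))%E := measureDI (@mu2 R) mX mG.
have f1 : (mu2 (X `\` G) \is a fin_num).
  rewrite ge0_fin_numE ?measure_ge0 //; apply: le_lt_trans fX.
  by apply: le_measure; rewrite ?inE; [exact: measurableD|exact: mX|move=> ? []].
have f2 : (mu2 (X `&` G) \is a fin_num).
  rewrite ge0_fin_numE ?measure_ge0 //; apply: le_lt_trans fX.
  by apply: le_measure; rewrite ?inE; [exact: measurableI|exact: mX|move=> ? []].
by rewrite e fineD.
Qed.


Lemma arith (a b c d a1 a2 b1 b2 c1 c2 d1 d2 : R) : a = a1 + a2 -> b = b1 + b2 ->
  c = c1 + c2 -> d = d1 + d2 -> a2 = b2 -> c2 = d2 -> a1 = c1 -> b1 = d1 -> b - d = a - c.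
Proof. move=> -> -> -> -> -> -> -> ->; ring. Qed.

Lemma gp_sub Q Q' : (Q' `<=` Q)%fset -> general_position Q -> general_position Q'.
Proof.
by move=> /fsubsetP s gp a b c aQ bQ cQ; apply: gp; apply: s.
Qed.

End F.

Theorem lemma1 (R : realType) (P : {fset pt R}) (t u v : pt R) :
  general_position P ->
  consecutive_vertices P t u v ->
  forall w : pt R, L1 P w -> w != u -> w != t -> w != v ->
    sensitivity (P `\ u)%fset w = sensitivity P w.
Proof.
move=> gp [[Lt [Lu [tu Htu]]] [[_ [Lv [uv Huv]]] tv]] w Lw wu wt wv.
have tP := L1_in Lt; have uP := L1_in Lu; have vP := L1_in Lv; have wP := L1_in Lw.
have D0 : orient t u v != 0 by exact: gp.
have Hs1 : forall p, p \in P -> 0 <= orient t u v * orient t u p.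
  case: Htu => H p pP.
  - have hv := H v vP; have hD : 0 < orient t u v by rewrite lt_neqAle eq_sym D0 hv.
    by apply: mulr_ge0; [exact: ltW|exact: H].
  - have hv := H v vP; have hD : orient t u v < 0 by rewrite lt_neqAle D0 hv.
    by apply: mulr_le0; [exact: ltW|exact: H].
have Hs2 : forall p, p \in P -> 0 <= orient t u v * orient u v p.
  have eD : orient u v t = orient t u v by rewrite /orient; ring.
  case: Huv => H p pP.
  - have hv := H t tP; rewrite eD in hv.
    have hD : 0 < orient t u v by rewrite lt_neqAle eq_sym D0 hv.
    by apply: mulr_ge0; [exact: ltW|exact: H].
  - have hv := H t tP; rewrite eD in hv.
    have hD : orient t u v < 0 by rewrite lt_neqAle D0 hv.
    by apply: mulr_le0; [exact: ltW|exact: H].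
have HD : 0 < orient t u v * orient t u v.
  by rewrite lt_neqAle eq_sym mulf_neq0 //= -expr2 sqr_ge0.
have fu : orient t v u = - orient t u v by rewrite /orient; ring.
have fw : orient t v u * orient t v w < 0.
  have fw0 : orient t v w != 0 by apply: gp; rewrite // eq_sym.
  have fu0 : orient t v u != 0 by rewrite fu oppr_eq0.
  rewrite ltNge; apply/negP => hpos.
  have hpos' : 0 < orient t v u * orient t v w by rewrite lt_neqAle eq_sym mulf_neq0.
  move: (Hs1 w wP) (Hs2 w wP) hpos'.
  have E1 := bary_id1 t u v w; have E2 := bary_id2 t u v w; have Es := bary_sum t u v w.
  rewrite fu.
  move: (orient u v w) (orient t u w) (orient t v w) (orient t u v) D0 E1 E2 Es fu
    => a c f D D0 E1 E2 Es fuD Da Dc Dbpos.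
  have Db : 0 < D * (- f) by rewrite mulrN -mulNr.
  have sum : a + (- f) + c = D by lra.
  have [ac0|ac0] := eqVneq (a + c) 0.
    have Da0 : D * a = 0 by nra.
    have Dc0 : D * c = 0 by nra.
    have a0 : a = 0 by move/eqP: Da0; rewrite mulf_eq0 (negPf D0) => /eqP.
    have c0 : c = 0 by move/eqP: Dc0; rewrite mulf_eq0 (negPf D0) => /eqP.
    have fD : f = - D by lra.
    move/eqP: wu; apply; move: E1 E2; rewrite a0 c0 fD.
    case: (w) => w1 w2; case: (u) => u1 u2 /= E1 E2.
    by congr (_, _); apply: (mulfI D0); [rewrite E1|rewrite E2]; ring.
  have wc := comb_bary D0 ac0 sum.
  have := wc t u v w; rewrite E1 E2 => /(_ (ltac:(ring)) (ltac:(ring))) {}wc.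
  have Dac : 0 < D * (a + c) by rewrite lt_neqAle eq_sym mulf_neq0 //= mulrDr; lra.
  have DD : 0 < D * D by rewrite lt_neqAle eq_sym mulf_neq0 //= -expr2 sqr_ge0.
  have lam0 : 0 < - f / D.
    have -> : - f / D = D * (- f) / (D * D) by field.
    exact: divr_gt0.
  have lam1 : - f / D < 1.
    have -> : - f / D = 1 - D * (a + c) / (D * D).
      rewrite (_ : a + c = D + f); last by lra.
      by field.
    by rewrite ltrBlDr ltrDl divr_gt0.
  have yP : conv_hull P (comb (a / (a + c)) t v).
    apply: conv_convex; [|exact: conv_pt|exact: conv_pt].
    have -> : a / (a + c) = D * a / (D * (a + c)) by field; rewrite ?D0 ?ac0 ?mulf_neq0.
    apply/andP; split; first by apply: divr_ge0; lra.
    by rewrite ler_pdivrMr // mul1r; lra.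
  have uy := Lw.2 u _ _ (conv_pt uP) yP lam0 lam1 wc.
  have : orient t v u = 0 by rewrite uy orient_comb /orient; ring.
  by rewrite fuD; move/eqP; rewrite oppr_eq0 (negPf D0).
set k := orient t v u.
set G := [set x : R * R | 0 <= (- k) * orient t v x].
have mG : measurable G by exact: mhalf_or.
have gpu : general_position (P `\ u)%fset by apply: gp_sub gp; exact: subD1.
have gpw : general_position (P `\ w)%fset by apply: gp_sub gp; exact: subD1.
have gpuw : general_position ((P `\ u) `\ w)%fset by apply: gp_sub gpu; exact: subD1.
have Euw : ((P `\ w) `\ u)%fset = ((P `\ u) `\ w)%fset by rewrite !fsetDDl fsetUC.
have ut : u != t by rewrite eq_sym.
have Hs1u : forall p, p \in (P `\ u)%fset -> 0 <= orient t u v * orient t u p.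
  by move=> p /[!inE] /andP[_ ?]; exact: Hs1.
have Hs2u : forall p, p \in (P `\ u)%fset -> 0 <= orient t u v * orient u v p.
  by move=> p /[!inE] /andP[_ ?]; exact: Hs2.
have Hs1w : forall p, p \in (P `\ w)%fset -> 0 <= orient t u v * orient t u p.
  by move=> p /[!inE] /andP[_ ?]; exact: Hs1.
have Hs2w : forall p, p \in (P `\ w)%fset -> 0 <= orient t u v * orient u v p.
  by move=> p /[!inE] /andP[_ ?]; exact: Hs2.
have kk : 0 < k * k by rewrite /k fu mulrNN.
have kw : 0 < (- k) * orient t v w by rewrite mulNr oppr_gt0.
have i1 : conv_hull P `&` G = conv_hull (P `\ u)%fset `&` G.
  apply/seteqP; split => x [Ax Gx]; split => //.
    apply: (@lemmaS _ P t u v u x (orient t u v) k) => //.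
    by move: Gx; rewrite /G /= mulNr oppr_ge0.
  exact: conv_sub (subD1 P u) Ax.
have i2 : conv_hull (P `\ w)%fset `&` G = conv_hull ((P `\ u) `\ w)%fset `&` G.
  apply/seteqP; split => x [Ax Gx]; split => //.
    rewrite -Euw; apply: (@lemmaS _ (P `\ w)%fset t u v u x (orient t u v) k) => //.
    - by rewrite !inE tP andbT eq_sym.
    - by rewrite !inE vP andbT eq_sym.
    - by rewrite !inE uP andbT eq_sym.
    by move: Gx; rewrite /G /= mulNr oppr_ge0.
  rewrite -Euw in Ax; exact: conv_sub (subD1 _ u) Ax.
have i3 : conv_hull P `\` G = conv_hull (P `\ w)%fset `\` G.
  apply/seteqP; split => x [Ax Gx]; split => //.
    apply: (@lemmaS _ P t u v w x (orient t u v) (- k)) => //.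
    by move: Gx; rewrite /G /= => /negP; rewrite -ltNge => /ltW.
  exact: conv_sub (subD1 P w) Ax.
have i4 : conv_hull (P `\ u)%fset `\` G = conv_hull ((P `\ u) `\ w)%fset `\` G.
  apply/seteqP; split => x [Ax Gx]; split => //.
    apply: (@lemmaS _ (P `\ u)%fset t u v w x (orient t u v) (- k)) => //.
    - by rewrite !inE tP andbT eq_sym.
    - by rewrite !inE vP andbT eq_sym.
    - by rewrite !inE wP andbT.
    by move: Gx; rewrite /G /= => /negP; rewrite -ltNge => /ltW.
  exact: conv_sub (subD1 _ w) Ax.
have e1 := fine_split (conv_meas gp) mG (conv_fin gp).
have e2 := fine_split (conv_meas gpu) mG (conv_fin gpu).
have e3 := fine_split (conv_meas gpw) mG (conv_fin gpw).
have e4 := fine_split (conv_meas gpuw) mG (conv_fin gpuw).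
have m1 := congr1 (fun S => fine (mu2 S)) i1.
have m2 := congr1 (fun S => fine (mu2 S)) i2.
have m3 := congr1 (fun S => fine (mu2 S)) i3.
have m4 := congr1 (fun S => fine (mu2 S)) i4.
have goal := arith e1 e2 e3 e4 m1 m2 m3 m4.
exact: goal.
Qed.
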